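(* Let $\mathbb{B}=\mathbb{C}\otimes\mathbb{H}$ be the algebra of complexified quaternions, whose elements are written $x=(x_1,x_2,x_3,x_4)$ to mean $x=x_1+x_2\hat{i}+x_3\hat{j}+x_4\hat{k}$ with $x_1,\dots,x_4\in\mathbb{C}$. The quaternion units satisfy $\hat{i}^2=\hat{j}^2=\hat{k}^2=\hat{i}\hat{j}\hat{k}=-1$, and multiplication is extended $\mathbb{C}$-bilinearly, with the complex scalars commuting with $\hat{i},\hat{j},\hat{k}$. Call $x\in\mathbb{B}$ entangled if its concurrence $C(x)=2\,|x_1x_4-x_2x_3|$ is nonzero. Let $\alpha,\beta\in\mathbb{C}$ with $\alpha\neq0$, $\beta\neq0$ and $|\alpha|^2+|\beta|^2=1$. Let $q$ be one of $$(\alpha,\beta,0,0),\quad (0,0,\alpha,\beta),\quad (\alpha,0,\beta,0),\quad (0,\alpha,0,\beta).$$ Let $p=(a_1,a_2,a_3,a_4)$ with $a_1,\dots,a_4\in\mathbb{R}$ and $a_1^2+a_2^2+a_3^2+a_4^2=1$, and suppose $p$ satisfies: (R1) $p$ is not entangled, i.e. $a_1a_4=a_2a_3$; (R2) $p$ is not a pure state, i.e. at least two of $a_1,\dots,a_4$ are nonzero; (R3) $p$ is connected to $q$ in exactly one direction, i.e. there is exactly one index $m\in\{1,2,3,4\}$ for which both the $m$-th coordinate of $p$ and the $m$-th coordinate of $q$ are nonzero. Then $\Lambda(q):=pqp$ is entangled, i.e. $C(pqp)\neq0$.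
   Context: In the paper, a one-particle state $\alpha|0\rangle+\beta|1\rangle$ with $|\alpha|^2+|\beta|^2=1$ is embedded in $\mathbb{B}$ in one of the four listed ways. The map $\Lambda(q)=pqp$, with $p$ a real unit quaternion, is proposed as an ''entanglement operator''. The concurrence of $x=(x_1,x_2,x_3,x_4)$ is $C(x)=2|x_1x_4-x_2x_3|$, and $x$ is called entangled iff $C(x)\neq0$. A ''pure state'' in $\mathbb{B}$ means an element with only one nonzero coordinate. *)

(* Defs.v *)
(* complex numbers R[i] over an arbitrary real closed field R
   (this includes the real numbers; the statement is purely algebraic). *)
From HB Require Import structures.
From mathcomp Require Import all_boot all_order all_algebra.
From mathcomp Require Import complex.
Set Implicit Arguments. Unset Strict Implicit. Unset Printing Implicit Defensive.
Import Order.TTheory GRing.Theory Num.Theory.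
Local Open Scope ring_scope.

Record cquat (R : rcfType) := CQuat {
  cq1 : R[i]; cq2 : R[i]; cq3 : R[i]; cq4 : R[i] }.

(* coordinate m (m = 0,1,2,3 corresponds to the paper's 1,2,3,4) *)
Definition cqcoord (R : rcfType) (x : cquat R) (m : 'I_4) : R[i] :=
  match val m with
  | 0 => cq1 x | 1 => cq2 x | 2 => cq3 x | _ => cq4 x end.

(* Hamilton product, extended C-bilinearly (i^2=j^2=k^2=ijk=-1). *)
Definition cqmul (R : rcfType) (x y : cquat R) : cquat R :=
  let: CQuat a1 b1 c1 d1 := x in
  let: CQuat a2 b2 c2 d2 := y in
  CQuat (a1*a2 - b1*b2 - c1*c2 - d1*d2)
        (a1*b2 + b1*a2 + c1*d2 - d1*c2)
        (a1*c2 - b1*d2 + c1*a2 + d1*b2)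
        (a1*d2 + b1*c2 - c1*b2 + d1*a2).

Definition concurrence (R : rcfType) (x : cquat R) : R[i] :=
  2 * `|cq1 x * cq4 x - cq2 x * cq3 x|.

Definition entangled (R : rcfType) (x : cquat R) : Prop := concurrence x != 0.

Definition pure_state (R : rcfType) (x : cquat R) : Prop :=
  #|[set m : 'I_4 | cqcoord x m != 0]| = 1%N.

Definition connections (R : rcfType) (x y : cquat R) : nat :=
  #|[set m : 'I_4 | (cqcoord x m != 0) && (cqcoord y m != 0)]|.

(* Main.v *)
Require Import Defs.
From HB Require Import structures.
From mathcomp Require Import all_boot all_order all_algebra.
From mathcomp Require Import complex ring lra.
Import Order.TTheory GRing.Theory Num.Theory.
Local Open Scope ring_scope.

Lemma card4 (P : pred 'I_4) : #|[set m | P m]| = (\sum_(m < 4) P m)%N.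
Proof. rewrite -sum1_card big_mkcond /=; apply: eq_bigr => i _; rewrite inE; by case: (P i). Qed.

Lemma key (R:rcfType) (x y : R) (al be : R[i]) : x != 0 -> y != 0 -> al != 0 -> be != 0 ->
  ((2*x*y*(x^+2+y^+2))%:C * (al*be))%C != 0.
Proof.
move=> hx hy ha hb; rewrite mulf_neq0 ?mulf_neq0 // fmorph_eq0 !mulf_neq0 ?pnatr_eq0 //.
by rewrite paddr_eq0 ?sqr_ge0 // !sqrf_eq0 negb_and hx.
Qed.

Ltac split0 a hcard hconn hr := let h := fresh "h" in have [h|h] := eqVneq a 0;
  [subst a | rewrite ?h ?(negbTE h) in hcard hconn hr].

Theorem mainTheorem1 (R : rcfType) (alpha beta : R[i]) (q : cquat R)
    (a1 a2 a3 a4 : R) :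
  alpha != 0 -> beta != 0 -> `|alpha| ^+ 2 + `|beta| ^+ 2 = 1 ->
  (q = CQuat alpha beta 0 0 \/ q = CQuat 0 0 alpha beta \/
   q = CQuat alpha 0 beta 0 \/ q = CQuat 0 alpha 0 beta) ->
  a1 ^+ 2 + a2 ^+ 2 + a3 ^+ 2 + a4 ^+ 2 = 1 ->
  let p := CQuat (a1%:C)%C (a2%:C)%C (a3%:C)%C (a4%:C)%C in
  ~ entangled p ->
  (#|[set m : 'I_4 | cqcoord p m != 0%R]| >= 2)%N ->
  connections p q = 1%N ->
  entangled (cqmul (cqmul p q) p).
Proof.
move=> an bn _ hq _ p hent hcard hconn.
have hr : a1 * a4 == a2 * a3.
  move/negP: hent; rewrite negbK /concurrence /= mulf_eq0 pnatr_eq0 /= normr_eq0.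
  by rewrite -!rmorphM -rmorphB fmorph_eq0 subr_eq0.
rewrite card4 !big_ord_recl big_ord0 /= !fmorph_eq0 in hcard.
rewrite /connections card4 !big_ord_recl big_ord0 /= !fmorph_eq0 in hconn.
rewrite /entangled /concurrence mulf_eq0 negb_or pnatr_eq0 /= normr_eq0.
clear hent; subst p.
case: hq => [->|[->|[->|->]]] /= in hconn *;
split0 a1 hcard hconn hr; split0 a2 hcard hconn hr; split0 a3 hcard hconn hr; split0 a4 hcard hconn hr;
rewrite ?eqxx ?an ?bn ?andbT ?andbF ?mul0r ?mulr0 /= in hcard hconn hr;
try (exfalso; move: hcard hconn; clear; by []);
rewrite ?[0 == _]eq_sym ?mulf_eq0  in hr;
repeat match goal with h : is_true (?a != 0) |- _ => rewrite (negbTE h) in hr end; try done.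
all: rewrite ?rmorph0.
all: match goal with hx : is_true (?x != 0), hy : is_true (?y != 0) |- is_true (?E != 0) =>
  first [ have -> : E = ((2*x*y*(x^+2+y^+2))%:C * (alpha*beta))%C by ring
        | have -> : E = - ((2*x*y*(x^+2+y^+2))%:C * (alpha*beta))%C by ring ]
  end; rewrite ?oppr_eq0 key //.
Qed.
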